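(* Let $g\ge 3$, $m_g=2g+2$, $h_g=\binom{m_g}{2}$, and let $(k,r)\in\Gamma_\psi$. Then: (i) if $k$ has a marking of weight at least $g+1$, then $r$ is not GIT-semistable; (ii) if $\mathrm{supp}(k)$ is reducible and, for some irreducible component of $\mathrm{supp}(k)$, the set of markings of $k$ lying on smooth points of $\mathrm{supp}(k)$ on that component consists of exactly one marking, of weight $1$, then $r$ is not GIT-semistable; (iii) if $\mathrm{supp}(k)$ is integral and all markings of $k$ have weight $1$, then $r\in V$.
   Context: We work over $\mathbb{C}$. Let $\mathcal C\to\mathbb{P}^5\cong|\mathcal O_{\mathbb{P}^2}(2)|$ be the universal plane conic and, for $m\ge 2$, let $\mathrm{Sym}^m_{\mathbb{P}^5}\mathcal C$ be the quotient of the $m$-fold fibre product $\mathcal C\times_{\mathbb{P}^5}\dots\times_{\mathbb{P}^5}\mathcal C$ by the symmetric group $S_m$, with projection $\rho$ to $\mathbb{P}^5$. For $k\in\mathrm{Sym}^m_{\mathbb{P}^5}\mathcal C$, $\mathrm{supp}(k)$ is the plane conic parametrized by $\rho(k)$; the distinct points of $k$ (a multiset of $m$ points on $\mathrm{supp}(k)$) are its markings, and the weight of a marking is the number of times it appears in $k$. $k$ is called degenerate if $\mathrm{supp}(k)$ is not integral. Let $\mathbb P_{h}=\mathrm{Sym}^{h}(\mathbb{P}^2)^\vee$ be the space of configurations of $h$ plane lines (with multiplicities), with its natural $SL(3)$-action and linearization; $\mathbb P_h^{ss}$ denotes the GIT-semistable points. Fix $g\ge3$, $m_g=2g+2$, $h_g=\binom{m_g}{2}$,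 and define the rational map $\psi\colon\mathrm{Sym}^{m_g}_{\mathbb{P}^5}\mathcal C\dashrightarrow\mathbb P_{h_g}$ as follows: if $k$ has distinct markings $p_1,\dots,p_r$ with weights $m_1,\dots,m_r$, then $\psi(k)$ is the configuration consisting of the line $\overline{p_ip_j}$ (spanned by $p_i,p_j$) with multiplicity $m_im_j$ for each $1\le i<j\le r$, together with the tangent line $\mathbb T_{p_h}\mathrm{supp}(k)$ with multiplicity $\binom{m_h}{2}$ for each $h$ with $m_h>1$. Let $\Gamma_\psi\subset\mathrm{Sym}^{m_g}_{\mathbb{P}^5}\mathcal C\times\mathbb P_{h_g}$ be the closure of the graph of $\psi$ and $p\colon\Gamma_\psi\to\mathbb P_{h_g}$ the second projection. Let $V$ be the set of $r\in p(\Gamma_\psi)\cap\mathbb P_{h_g}^{ss}$ such that there is no degenerate $k$ with $(k,r)\in\Gamma_\psi$. (Hilbert–Mumford criterion: $r\in\mathbb P_{h}$ is GIT-semistable iff $\max_{x\in\mathbb{P}^2}\mu_x(r)\le 2h/3$ and $\max_{l}\mu_l(r)\le h/3$, where $\mu_x(r)$ is the number of lines of $r$ through $x$ counted with multiplicity and $\mu_l(r)$ is the multiplicity of the line $l$ in $r$.) *)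

(* Defs.v *)
From mathcomp Require Import all_boot all_algebra.
From mathcomp Require Import Rstruct.
From mathcomp.real_closed Require Import complex.
Set Implicit Arguments. Unset Strict Implicit. Unset Printing Implicit Defensive.
Import GRing.Theory Num.Theory.
Local Open Scope ring_scope.

Definition C : numClosedFieldType := (Rdefinitions.R)[i].

(* Homogeneous coordinates: points of P^2 and lines of (P^2)^v are nonzero
   row vectors in C^3; two nonzero vectors give the same point of the
   projective plane iff they span the same row space (proportional). *)
Definition vec3 := 'rV[C]_3.
Definition same_pt (u v : vec3) : bool := (u == v)%MS.

(* bilinear pairing: the point x lies on the line with coefficients u *)
Definition dot (u x : vec3) : C := (u *m x^T) 0 0.

(* a plane conic is given by a nonzero symmetric 3x3 matrix A (up to scalar),
   with equation  q_A(x) = x A x^T = 0 *)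
Definition qf (A : 'M[C]_3) (x : vec3) : C := (x *m A *m x^T) 0 0.
Definition conic_rep (A : 'M[C]_3) : Prop := A^T = A /\ A != 0.

(* supp is a union of two distinct lines {u=0} u {v=0}: the quadratic form
   factors as a product of two non-proportional linear forms *)
Definition line_pair (A : 'M[C]_3) (u v : vec3) : Prop :=
  [/\ u != 0, v != 0, ~~ same_pt u v & forall x, qf A x = dot u x * dot v x].
Definition reducible_conic (A : 'M[C]_3) : Prop := exists u v, line_pair A u v.
(* the conic is integral iff its (nonzero) quadratic form is an irreducible
   polynomial, i.e. it is not a product of two linear forms *)
Definition integral_conic (A : 'M[C]_3) : Prop :=
  ~ exists u v : vec3, forall x, qf A x = dot u x * dot v x.

(* A point k of Sym^m_{P^5} C is represented by (A, p): A a conic,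
   p : 'I_m -> vec3 an ordered list of m points on the conic (nonzero vectors).
   Representatives (A,p),(A',p') give the same k iff A' is proportional to A and
   p' is, up to reordering, pointwise projectively equal to p. *)
Definition sym_rep (m : nat) (A : 'M[C]_3) (p : 'I_m -> vec3) : Prop :=
  conic_rep A /\ forall i, p i != 0 /\ qf A (p i) = 0.

Definition weight (m : nat) (p : 'I_m -> vec3) (i : 'I_m) : nat :=
  #|[set j | same_pt (p j) (p i)]|.

(* A point r of P_h = Sym^h (P^2)^v is represented by l : 'I_h -> vec3
   (nonzero vectors), up to reordering and scaling each entry. *)
Definition lines_rep (h : nat) (l : 'I_h -> vec3) : Prop := forall t, l t != 0.

Definition mu_pt (h : nat) (l : 'I_h -> vec3) (x : vec3) : nat :=
  #|[set t | dot (l t) x == 0]|.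
Definition mu_line (h : nat) (l : 'I_h -> vec3) (L : vec3) : nat :=
  #|[set t | same_pt (l t) L]|.

(* GIT-semistability (Hilbert-Mumford criterion, as in the paper) *)
Definition semistable (h : nat) (l : 'I_h -> vec3) : Prop :=
  (forall x : vec3, x != 0 -> (3 * mu_pt l x <= 2 * h)%N) /\
  (forall L : vec3, L != 0 -> (3 * mu_line l L <= h)%N).

Definition cross (u v : vec3) : vec3 :=
  \row_(k < 3)
    (if k == 0 :> nat then u 0 1 * v 0 2 - u 0 2 * v 0 1
     else if k == 1 :> nat then u 0 2 * v 0 0 - u 0 0 * v 0 2
     else u 0 0 * v 0 1 - u 0 1 * v 0 0).
Definition tangent (A : 'M[C]_3) (x : vec3) : vec3 := x *m A.

Definition pairs (m : nat) := {x : 'I_m * 'I_m | (x.1 < x.2)%N}.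

(* psi on integral supports: the pair {i<j} contributes the line p_i p_j if the
   two points are distinct, and the tangent line at p_i otherwise.  Grouping
   the pairs by markings, this gives exactly the line p_a p_b with multiplicity
   m_a m_b and the tangent at p_a with multiplicity binom(m_a,2). *)
Definition psi_line (m : nat) (A : 'M[C]_3) (p : 'I_m -> vec3) (ij : pairs m) : vec3 :=
  let i := (val ij).1 in let j := (val ij).2 in
  if same_pt (p i) (p j) then tangent A (p i) else cross (p i) (p j).

Definition is_psi (m h : nat) (A : 'M[C]_3) (p : 'I_m -> vec3) (l : 'I_h -> vec3) : Prop :=
  exists f : 'I_h -> pairs m, bijective f /\ forall t, same_pt (l t) (psi_line A p (f t)).

Definition cvgC (z : nat -> C) (z0 : C) : Prop :=
  forall e : C, 0 < e -> exists N, forall n, (N <= n)%N -> `|z n - z0| < e.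

(* (k, r) lies in Gamma_psi, the (Euclidean = Zariski) closure of the graph of
   psi over its domain of regularity (integral supports): there are points
   k_n -> k with integral support and psi(k_n) -> r.  Convergence in the
   projective spaces / symmetric products is convergence of suitable
   (suitably ordered) representatives; since the sequences of representatives
   are existentially quantified we may take the limits to be the given
   representatives. *)
Definition in_Gamma (m h : nat) (A : 'M[C]_3) (p : 'I_m -> vec3) (l : 'I_h -> vec3) : Prop :=
  exists (An : nat -> 'M[C]_3) (pn : nat -> 'I_m -> vec3) (ln : nat -> 'I_h -> vec3),
    [/\ forall n, sym_rep (An n) (pn n) /\ integral_conic (An n),
        forall n, lines_rep (ln n) /\ is_psi (An n) (pn n) (ln n),
        forall a b, cvgC (fun n => An n a b) (A a b),
        forall i c, cvgC (fun n => pn n i 0 c) (p i 0 c) &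
        forall t c, cvgC (fun n => ln n t 0 c) (l t 0 c)].

(* k is degenerate iff supp(k) is not integral *)
Definition in_V (m h : nat) (l : 'I_h -> vec3) : Prop :=
  [/\ semistable l,
      exists A (p : 'I_m -> vec3), sym_rep A p /\ in_Gamma A p l &
      forall A (p : 'I_m -> vec3), sym_rep A p -> in_Gamma A p l -> integral_conic A].

(* Main.v *)
Require Import Defs.
From mathcomp Require Import all_boot all_algebra.
From mathcomp Require Import Rstruct.
From mathcomp.real_closed Require Import complex.
From mathcomp Require Import ring zify order.
From Stdlib Require Import Classical.
Set Implicit Arguments. Unset Strict Implicit. Unset Printing Implicit Defensive.
Import Order.TTheory GRing.Theory Num.Theory.
Local Open Scope ring_scope.

Lemma sum3 (f : 'I_3 -> C) : \sum_(k < 3) f k = f 0 + f 1 + f 2.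
Proof. rewrite !big_ord_recr big_ord0 /= add0r; congr (f _ + f _ + f _); exact/val_inj. Qed.

Lemma dotE u x : dot u x = u 0 0 * x 0 0 + u 0 1 * x 0 1 + u 0 2 * x 0 2.
Proof. by rewrite /dot !mxE sum3 !mxE. Qed.

Lemma qfE A x : qf A x =
  x 0 0 * (x 0 0 * A 0 0 + x 0 1 * A 1 0 + x 0 2 * A 2 0) +
  x 0 1 * (x 0 0 * A 0 1 + x 0 1 * A 1 1 + x 0 2 * A 2 1) +
  x 0 2 * (x 0 0 * A 0 2 + x 0 1 * A 1 2 + x 0 2 * A 2 2).
Proof. rewrite /qf; do ?[rewrite mxE|rewrite sum3]. ring. Qed.

Lemma crossE u v : [/\ cross u v 0 0 = u 0 1 * v 0 2 - u 0 2 * v 0 1,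
   cross u v 0 1 = u 0 2 * v 0 0 - u 0 0 * v 0 2 &
   cross u v 0 2 = u 0 0 * v 0 1 - u 0 1 * v 0 0].
Proof. by rewrite !mxE. Qed.

Lemma vec3P (x y : vec3) : x 0 0 = y 0 0 -> x 0 1 = y 0 1 -> x 0 2 = y 0 2 -> x = y.
Proof.
move=> h0 h1 h2; apply/rowP => k.
case: k => [[|[|[|k]]] hk] //.
- by have -> : Ordinal hk = 0 by apply/val_inj.
- by have -> : Ordinal hk = 1 by apply/val_inj.
- by have -> : Ordinal hk = 2 by apply/val_inj.
Qed.

Lemma same_pt_sub u v : same_pt u v -> exists c, u = c *: v.
Proof. by case/andP => /sub_rVP. Qed.

Lemma same_pt_sym u v : same_pt u v = same_pt v u.
Proof. by rewrite /same_pt /= andbC. Qed.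

Lemma same_pt_refl u : same_pt u u.
Proof. by rewrite /same_pt; apply/eqmxP. Qed.

Lemma same_pt_trans u v w : same_pt u v -> same_pt v w -> same_pt u w.
Proof. by move=> /eqmxP h1 /eqmxP h2; apply/eqmxP; apply: eqmx_trans h1 h2. Qed.

Lemma same_pt_scale (c : C) u : c != 0 -> same_pt (c *: u) u.
Proof. by move=> hc; apply/eqmxP; apply: eqmx_scale. Qed.

Lemma dotC u x : dot u x = dot x u.
Proof. rewrite !dotE; ring. Qed.

Lemma dotZl c u x : dot (c *: u) x = c * dot u x.
Proof. rewrite !dotE !mxE; ring. Qed.

Lemma dotZr c u x : dot u (c *: x) = c * dot u x.
Proof. rewrite !dotE !mxE; ring. Qed.

Lemma dotDl u v x : dot (u + v) x = dot u x + dot v x.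
Proof. rewrite !dotE !mxE; ring. Qed.

Lemma dotDr u x y : dot u (x + y) = dot u x + dot u y.
Proof. rewrite !dotE !mxE; ring. Qed.

Lemma dot0l x : dot 0 x = 0.
Proof. rewrite !dotE !mxE; ring. Qed.

Lemma same_pt_dot u v x : same_pt u v -> dot v x = 0 -> dot u x = 0.
Proof. by case/same_pt_sub => c ->; rewrite dotZl => ->; rewrite mulr0. Qed.

Lemma same_pt_dotr u v x : same_pt u v -> dot x v = 0 -> dot x u = 0.
Proof. by rewrite !(dotC x); apply: same_pt_dot. Qed.

Lemma cross_dotl u v : dot (cross u v) u = 0.
Proof. rewrite dotE; case: (crossE u v) => -> -> ->; ring. Qed.

Lemma cross_dotr u v : dot (cross u v) v = 0.
Proof. rewrite dotE; case: (crossE u v) => -> -> ->; ring. Qed.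

Lemma qfZ A c x : qf A (c *: x) = c ^+ 2 * qf A x.
Proof. rewrite !qfE !mxE; ring. Qed.

Lemma tangent_dot A x : dot (tangent A x) x = qf A x.
Proof. rewrite dotE qfE /tangent; do ?[rewrite mxE|rewrite sum3]; ring. Qed.

Lemma psi_line_dot m (A : 'M[C]_3) (p : 'I_m -> vec3) (P : pairs m) :
  qf A (p (val P).1) = 0 ->
  dot (psi_line A p P) (p (val P).1) = 0 /\ dot (psi_line A p P) (p (val P).2) = 0.
Proof.
rewrite /psi_line => hq; case: ifP => hs.
  rewrite same_pt_sym in hs; have [c ->] := same_pt_sub hs.
  by rewrite dotZr tangent_dot hq mulr0.
by rewrite cross_dotl cross_dotr.
Qed.

Lemma divhelp (x y z w : C) : x != 0 -> x * y = z * w -> y = z / x * w.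
Proof. by move=> hx h; apply: (mulfI hx); rewrite h; field. Qed.

Lemma from_lin (x y d : C) : d = 0 -> x - y = d -> x = y.
Proof. by move=> -> /eqP; rewrite subr_eq0 => /eqP. Qed.
Lemma from_linN (x y d : C) : d = 0 -> x - y = - d -> x = y.
Proof. by move=> -> /eqP; rewrite oppr0 subr_eq0 => /eqP. Qed.
Ltac lin e := first [apply: (from_lin e); ring | apply: (from_linN e); ring].

Lemma vec3_neq0 (a : vec3) : a != 0 -> [\/ a 0 0 != 0, a 0 1 != 0 | a 0 2 != 0].
Proof.
move=> ha; apply/or3P; apply: contraNT ha; rewrite !negb_or !negbK => /and3P[/eqP h0 /eqP h1 /eqP h2].
by apply/eqP/vec3P; rewrite ?mxE.
Qed.

Lemma crossP a b : a != 0 -> cross a b = 0 -> exists c, b = c *: a.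
Proof.
move=> ha hc.
have e0 : cross a b 0 0 = 0 by rewrite hc mxE.
have e1 : cross a b 0 1 = 0 by rewrite hc mxE.
have e2 : cross a b 0 2 = 0 by rewrite hc mxE.
case: (crossE a b) => c0 c1 c2; rewrite c0 in e0; rewrite c1 in e1; rewrite c2 in e2.
case/vec3_neq0: ha => h.
- exists (b 0 0 / a 0 0); apply: vec3P; rewrite mxE.
  + by field.
  + apply: divhelp => //; lin e2.
  + apply: divhelp => //; lin e1.
- exists (b 0 1 / a 0 1); apply: vec3P; rewrite mxE.
  + apply: divhelp => //; lin e2.
  + by field.
  + apply: divhelp => //; lin e0.
- exists (b 0 2 / a 0 2); apply: vec3P; rewrite mxE.
  + apply: divhelp => //; lin e1.
  + apply: divhelp => //; lin e0.
  + by field.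
Qed.

Lemma cross_neq0 a b : a != 0 -> b != 0 -> ~~ same_pt a b -> cross a b != 0.
Proof.
move=> ha hb hs; apply/negP => /eqP hc.
have [c hbc] := crossP ha hc.
have cn0 : c != 0 by apply: contraNneq hb => c0; rewrite hbc c0 scale0r.
by move: hs; rewrite same_pt_sym hbc same_pt_scale.
Qed.

Lemma cross_cross_id w u v : cross w (cross u v) = (dot w v) *: u - (dot w u) *: v.
Proof.
apply: vec3P; rewrite !dotE; do ?rewrite mxE; rewrite /=; ring.
Qed.

Lemma crossC u v : cross u v = - cross v u.
Proof. apply: vec3P; do ?rewrite mxE; rewrite /=; ring. Qed.

Lemma perp2 u v L : cross u v != 0 -> dot L u = 0 -> dot L v = 0 ->
  exists lam, L = lam *: cross u v.
Proof.
move=> hw hu hv; apply: crossP => //.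
by rewrite crossC cross_cross_id hu hv !scale0r subr0 oppr0.
Qed.

Definition bf (A : 'M[C]_3) x y := qf A (x + y) - qf A x - qf A y.

Lemma qf3 A (al be ga : C) a b e :
  qf A (al *: a + be *: b + ga *: e) =
  al ^+ 2 * qf A a + be ^+ 2 * qf A b + ga ^+ 2 * qf A e +
  al * be * bf A a b + al * ga * bf A a e + be * ga * bf A b e.
Proof. rewrite /bf !qfE; do ?rewrite mxE; ring. Qed.

Lemma cramer a b e s :
  (dot (cross a b) e) *: s =
  (dot (cross b e) s) *: a + (dot (cross e a) s) *: b + (dot (cross a b) s) *: e.
Proof. apply: vec3P; rewrite !dotE; do ?rewrite mxE; rewrite /=; ring. Qed.

Lemma exists_dot_neq0 w : w != 0 -> exists e, dot w e != 0.
Proof.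
case/vec3_neq0 => h; [exists (delta_mx 0 0)|exists (delta_mx 0 1)|exists (delta_mx 0 2)];
  rewrite dotE; do ?rewrite mxE; rewrite /=; by rewrite ?mulr1 ?mulr0 ?addr0 ?add0r.
Qed.

Lemma qf0 A : qf A 0 = 0.
Proof. rewrite qfE; do ?rewrite mxE; ring. Qed.

Lemma K3 A a b c : integral_conic A -> a != 0 -> b != 0 -> c != 0 ->
  ~~ same_pt a b -> ~~ same_pt a c -> ~~ same_pt b c ->
  qf A a = 0 -> qf A b = 0 -> qf A c = 0 -> dot (cross a b) c = 0 -> False.
Proof.
move=> hint ha hb hc sab sac sbc qa qb qc hdet.
have hw : cross a b != 0 by apply: cross_neq0.
have [e he] := exists_dot_neq0 hw.
set D := dot (cross a b) e in he.
have hcr := cramer a b e c; rewrite -/D hdet scale0r addr0 in hcr.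
set al := dot (cross b e) c in hcr; set be := dot (cross e a) c in hcr.
have hbf : al * be * bf A a b = 0.
  have := qf3 A al be 0 a b e; rewrite scale0r addr0 -hcr qfZ qc qa qb.
  move=> h; rewrite -[RHS](mulr0 (D ^+ 2)) h; ring.
have hal : al != 0.
  apply/negP => /eqP h0; move: hcr; rewrite h0 scale0r add0r => hcr.
  have hbe : be != 0 by apply: contraNneq hc => hb0; apply/eqP;
    apply: (scalerI he); rewrite hcr hb0 !scale0r scaler0.
  move: sbc; rewrite same_pt_sym.
  have -> : c = (be / D) *: b by rewrite mulrC -scalerA -hcr scalerA mulVf // scale1r.
  by rewrite same_pt_scale // mulf_neq0 // invr_eq0.
have hbe : be != 0.
  apply/negP => /eqP h0; move: hcr; rewrite h0 scale0r addr0 => hcr.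
  move: sac; rewrite same_pt_sym.
  have -> : c = (al / D) *: a by rewrite mulrC -scalerA -hcr scalerA mulVf // scale1r.
  by rewrite same_pt_scale // mulf_neq0 // invr_eq0.
have hab : bf A a b = 0.
  by move/eqP: hbf; rewrite !mulf_eq0 (negbTE hal) (negbTE hbe) /= => /eqP.
apply: hint.
exists (cross a b).
exists (D ^- 2 *: (qf A e *: cross a b + bf A a e *: cross b e + bf A b e *: cross e a)).
move=> s.
have hs := cramer a b e s; rewrite -/D in hs.
have := qf3 A (dot (cross b e) s) (dot (cross e a) s) (dot (cross a b) s) a b e.
rewrite -hs qfZ qa qb hab => h.
apply: (mulfI (expf_neq0 2 he)); rewrite h.
rewrite !dotZl !dotDl !dotZl !(dotC _ s).
field.
by [].
Qed.

Lemma ord3P (P : 'I_3 -> Prop) : P 0 -> P 1 -> P 2 -> forall i, P i.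
Proof.
move=> h0 h1 h2 [[|[|[|k]]] hk] //.
- by have -> : Ordinal hk = 0 by apply/val_inj.
- by have -> : Ordinal hk = 1 by apply/val_inj.
- by have -> : Ordinal hk = 2 by apply/val_inj.
Qed.

Definition mk3 (a b c : C) : vec3 :=
  \row_(k < 3) (if k == 0 :> nat then a else if k == 1 :> nat then b else c).
Lemma mk3E0 a b c : mk3 a b c 0 0 = a. Proof. by rewrite !mxE. Qed.
Lemma mk3E1 a b c : mk3 a b c 0 1 = b. Proof. by rewrite !mxE. Qed.
Lemma mk3E2 a b c : mk3 a b c 0 2 = c. Proof. by rewrite !mxE. Qed.

Lemma qf_eq0 A : A^T = A -> (forall x, qf A x = 0) -> A = 0.
Proof.
move=> hs hq.
have sy i j : A j i = A i j by rewrite -[in LHS]hs mxE.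
have two : (2 : C) != 0 by rewrite pnatr_eq0.
have E (x : vec3) (c : C) : c = qf A x -> c = 0 by rewrite hq.
have a00 : A 0 0 = 0 by apply: (E (mk3 1 0 0)); rewrite qfE !mk3E0 !mk3E1 !mk3E2; ring.
have a11 : A 1 1 = 0 by apply: (E (mk3 0 1 0)); rewrite qfE !mk3E0 !mk3E1 !mk3E2; ring.
have a22 : A 2 2 = 0 by apply: (E (mk3 0 0 1)); rewrite qfE !mk3E0 !mk3E1 !mk3E2; ring.
have a01 : 2 * A 0 1 = 0 by apply: (E (mk3 1 1 0)); rewrite qfE !mk3E0 !mk3E1 !mk3E2 (sy 0 1) a00 a11; ring.
have a02 : 2 * A 0 2 = 0 by apply: (E (mk3 1 0 1)); rewrite qfE !mk3E0 !mk3E1 !mk3E2 (sy 0 2) a00 a22; ring.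
have a12 : 2 * A 1 2 = 0 by apply: (E (mk3 0 1 1)); rewrite qfE !mk3E0 !mk3E1 !mk3E2 (sy 1 2) a11 a22; ring.
have H (x : C) : 2 * x = 0 -> x = 0 by move/eqP; rewrite mulf_eq0 (negbTE two) /= => /eqP.
move/H: a01 => a01; move/H: a02 => a02; move/H: a12 => a12.
apply/matrixP => i j; rewrite mxE; elim/ord3P: i; elim/ord3P: j => //; by rewrite sy.
Qed.


Definition cvgW (z : nat -> C) (z0 : C) : Prop :=
  forall e : C, 0 < e -> exists N, forall n, (N <= n)%N -> `|z n - z0| <= e.

Lemma cvgC_W z z0 : cvgC z z0 -> cvgW z z0.
Proof. move=> h e he; have [N hN] := h e he; exists N => n hn; exact/ltW/hN. Qed.

Lemma cvgW_add a a0 b b0 : cvgW a a0 -> cvgW b b0 -> cvgW (fun n => a n + b n) (a0 + b0).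
Proof.
move=> ha hb e he.
have he2 : 0 < e / 2 by rewrite divr_gt0.
have [N1 h1] := ha _ he2; have [N2 h2] := hb _ he2.
exists (maxn N1 N2) => n hn.
have hn1 : (N1 <= n)%N by apply: leq_trans hn; apply: leq_maxl.
have hn2 : (N2 <= n)%N by apply: leq_trans hn; apply: leq_maxr.
have -> : a n + b n - (a0 + b0) = (a n - a0) + (b n - b0) by ring.
apply: le_trans (ler_normD _ _) _.
by rewrite [e]splitr lerD ?h1 ?h2.
Qed.

Lemma cvgW_mul a a0 b b0 : cvgW a a0 -> cvgW b b0 -> cvgW (fun n => a n * b n) (a0 * b0).
Proof.
move=> ha hb e he.
set M := `|a0| + 1; set K := `|b0| + 1.
have hM : 0 < M by rewrite /M ltr_wpDl.
have hK : 0 < K by rewrite /K ltr_wpDl.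
have he2 : 0 < e / 2 by rewrite divr_gt0.
have [N0 h0] := ha 1 ltr01.
have [N1 h1] := ha (e / 2 / K) (divr_gt0 he2 hK).
have [N2 h2] := hb (e / 2 / M) (divr_gt0 he2 hM).
exists (maxn N0 (maxn N1 N2)) => n hn.
have hn0 : (N0 <= n)%N by apply: leq_trans hn; apply: leq_maxl.
have hn1 : (N1 <= n)%N by apply: leq_trans hn; rewrite leq_max leq_maxl orbT.
have hn2 : (N2 <= n)%N by apply: leq_trans hn; rewrite leq_max leq_maxr orbT.
have -> : a n * b n - a0 * b0 = a n * (b n - b0) + b0 * (a n - a0) by ring.
apply: le_trans (ler_normD _ _) _.
rewrite [e]splitr !normrM; apply: lerD.
  have han : `|a n| <= M.
    have -> : a n = a0 + (a n - a0) by ring.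
    by apply: le_trans (ler_normD _ _) _; rewrite lerD2l h0.
  apply: le_trans (ler_pM _ _ han (h2 _ hn2)) _ => //.
  by rewrite mulrC divfK ?gt_eqF.
apply: le_trans (ler_pM _ _ (_ : `|b0| <= K) (h1 _ hn1)) _ => //.
  by rewrite /K lerDl.
by rewrite mulrC divfK ?gt_eqF.
Qed.

Lemma cvgW_zero z z0 : cvgW z z0 -> (forall N, exists n, (N <= n)%N /\ z n = 0) -> z0 = 0.
Proof.
move=> hc hz; apply/eqP; apply/negPn/negP => hz0.
have hp : 0 < `|z0| / 2 by rewrite divr_gt0 ?normr_gt0.
have [N hN] := hc _ hp; have [n [hn e]] := hz N.
have := hN n hn; rewrite e sub0r normrN.
rewrite ler_pdivlMr // -subr_ge0.
have -> : `|z0| - `|z0| * 2 = - `|z0| by ring.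
by rewrite oppr_ge0 normr_le0 (negbTE hz0).
Qed.

Lemma pigeon (T : finType) (Q : nat -> T -> Prop) :
  (forall n, exists x, Q n x) -> exists x, forall N, exists n, (N <= n)%N /\ Q n x.
Proof.
move=> hQ.
suff H : forall (s : seq T) (Q : nat -> T -> Prop), (forall n, exists x, x \in s /\ Q n x) ->
   exists x, forall N, exists n, (N <= n)%N /\ Q n x.
  by apply: (H (enum T)) => n; have [x hx] := hQ n; exists x; rewrite mem_enum.
elim => [|x0 s IH] Q' hQ'.
  by have [x [hx _]] := hQ' 0%N.
case: (classic (forall N, exists n, (N <= n)%N /\ Q' n x0)) => hx0; first by exists x0.
have [N0 hN0] := not_all_ex_not _ _ hx0.
have [x hx] : exists x, forall N, exists n, (N <= n)%N /\ Q' (n + N0)%N x.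
  apply: IH => n; have [x [hxs hxq]] := hQ' (n + N0)%N.
  exists x; split => //.
  move: hxs; rewrite inE => /orP[/eqP ex|//].
  by exfalso; apply: hN0; exists (n + N0)%N; split; [rewrite leq_addl | rewrite -ex].
exists x => N; have [n [hn hq]] := hx N; exists (n + N0)%N; split => //.
by apply: leq_trans hn (leq_addr _ _).
Qed.

Lemma dot_cvg (u x : nat -> vec3) (u0 x0 : vec3) :
  (forall c, cvgC (fun n => u n 0 c) (u0 0 c)) -> (forall c, cvgC (fun n => x n 0 c) (x0 0 c)) ->
  cvgW (fun n => dot (u n) (x n)) (dot u0 x0).
Proof.
move=> hu hx.
have H := cvgW_add (cvgW_add (cvgW_mul (cvgC_W (hu 0)) (cvgC_W (hx 0)))
   (cvgW_mul (cvgC_W (hu 1)) (cvgC_W (hx 1)))) (cvgW_mul (cvgC_W (hu 2)) (cvgC_W (hx 2))).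
move=> e he; have [N hN] := H e he; exists N => n hn; rewrite !dotE; exact: hN.
Qed.

Lemma gamma_struct m h A (p : 'I_m -> vec3) (l : 'I_h -> vec3) : in_Gamma A p l ->
  exists F : 'I_h -> pairs m, bijective F /\
    forall t, dot (l t) (p (val (F t)).1) = 0 /\ dot (l t) (p (val (F t)).2) = 0.
Proof.
case=> An [pn [ln [hrep hpsi hA hp hl]]].
pose Q n (F : {ffun 'I_h -> pairs m}) := bijective F /\
  forall t, dot (ln n t) (pn n (val (F t)).1) = 0 /\ dot (ln n t) (pn n (val (F t)).2) = 0.
have hQ : forall n, exists F, Q n F.
  move=> n; have [_ [f [bf hf]]] := hpsi n.
  exists (finfun f); split.
    by apply: (eq_bij bf) => x; rewrite ffunE.
  move=> t; rewrite ffunE.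
  have [_ hr] := (hrep n).1.
  have := psi_line_dot (P := f t) (hr _).2 => -[d1 d2].
  by split; apply: same_pt_dot (hf t) _.
have [F hF] := pigeon hQ.
exists F; split.
  by have [n [_ [bF _]]] := hF 0%N.
move=> t; split.
- apply: (cvgW_zero (dot_cvg (hl t) (hp _))) => N.
  by have [n [hn [_ hq]]] := hF N; exists n; split => //; case: (hq t).
- apply: (cvgW_zero (dot_cvg (hl t) (hp _))) => N.
  by have [n [hn [_ hq]]] := hF N; exists n; split => //; case: (hq t).
Qed.

Local Close Scope ring_scope.

Lemma sym_count m (R : 'I_m -> 'I_m -> bool) : (forall a b, R a b = R b a) ->
  (2 * #|[set P : pairs m | R (val P).1 (val P).2]| =
   #|[set ab : 'I_m * 'I_m | (ab.1 != ab.2) && R ab.1 ab.2]|)%N.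
Proof.
move=> Rs.
set S := [set P : pairs m | R (val P).1 (val P).2].
pose sw (P : pairs m) := ((val P).2, (val P).1).
have E : [set ab : 'I_m * 'I_m | (ab.1 != ab.2) && R ab.1 ab.2] = (val @: S) :|: (sw @: S).
  apply/setP => -[a b]; rewrite !inE /=; apply/idP/idP.
  - case/andP => nab rab; case: (ltngtP a b) => hab.
    + apply/orP; left; apply/imsetP; exists (exist _ (a, b) hab) => //; by rewrite inE.
    + apply/orP; right; apply/imsetP; exists (exist _ (b, a) hab) => //; by rewrite inE /= Rs.
    + by move: nab; rewrite (val_inj hab) eqxx.
  - case/orP => /imsetP [[[a' b'] hP] hPS [-> ->]] /=; move: hPS; rewrite inE /= => hr.
    + by rewrite hr andbT neq_ltn hP.
    + by rewrite Rs hr andbT neq_ltn hP orbT.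
rewrite E cardsU.
have -> : val @: S :&: sw @: S = set0.
  apply/setP => -[a b]; rewrite !inE; apply/negP => /andP[/imsetP [P _ e1] /imsetP [Q _ e2]].
  move: (valP P) (valP Q); rewrite -e1; rewrite /sw in e2; case: e2 => -> -> /=.
  by move=> h1 h2; move: (ltn_trans h1 h2); rewrite ltnn.
rewrite cards0 subn0 !card_imset //.
- by rewrite mul2n addnn.
- exact: val_inj.
- by move=> P Q [e1 e2]; apply/val_inj; rewrite [val P]surjective_pairing [val Q]surjective_pairing e1 e2.
Qed.

Lemma row_sum m (Q : 'I_m -> 'I_m -> bool) :
  #|[set ab : 'I_m * 'I_m | Q ab.1 ab.2]| = (\sum_(a < m) #|[set b | Q a b]|)%N.
Proof.
rewrite -sum1_card.
rewrite (eq_bigl (fun ab : 'I_m * 'I_m => true && Q ab.1 ab.2)); last by move=> ab; rewrite inE.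
rewrite -(pair_big_dep xpredT Q (fun _ _ => 1%N)) /=.
by apply: eq_bigr => a _; rewrite sum1_card cardsE.
Qed.

Lemma sum_split m (K : {set 'I_m}) (f : 'I_m -> nat) c1 c2 :
  (forall a, a \in K -> f a = c1) -> (forall a, a \notin K -> f a = c2) ->
  (\sum_(a < m) f a = #|K| * c1 + (m - #|K|) * c2)%N.
Proof.
move=> h1 h2.
rewrite (bigID (fun a => a \in K)) /=.
rewrite (eq_bigr (fun _ => c1)); last by move=> a /h1.
rewrite [X in (_ + X)%N](eq_bigr (fun _ => c2)); last by move=> a /h2.
rewrite !sum_nat_const.
have -> : #|[pred a : 'I_m | a \notin K]| = (m - #|K|)%N.
  have h : (#|K| + #|[pred a : 'I_m | a \notin K]| = m)%N.
    by have := cardC K; rewrite card_ord.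
  lia.
done.
Qed.

Lemma heavy_count m (K : {set 'I_m}) :
  (#|K| * (2 * m - #|K| - 1) <= 2 * #|[set P : pairs m | ((val P).1 \in K) || ((val P).2 \in K)]|)%N.
Proof.
rewrite (sym_count (R := fun a b => (a \in K) || (b \in K))); last by move=> a b; rewrite orbC.
rewrite (row_sum (fun a b => (a != b) && ((a \in K) || (b \in K)))) (sum_split (K := K) (c1 := m.-1) (c2 := #|K|)).
- have : (#|K| <= m)%N by have := max_card K; rewrite card_ord.
  nia.
- move=> a ha; have := cardsC1 a; rewrite card_ord => <-; apply: eq_card => b; rewrite !inE ha /= andbT.
  by rewrite eq_sym.
- move=> a ha; apply: eq_card => b; rewrite !inE (negbTE ha) /=.
  by case: eqP => [<-|//]; rewrite (negbTE ha).
Qed.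

Lemma inner_count m (U : {set 'I_m}) :
  (2 * #|[set P : pairs m | ((val P).1 \in U) && ((val P).2 \in U)]| = #|U| * (#|U| - 1))%N.
Proof.
rewrite (sym_count (R := fun a b => (a \in U) && (b \in U))); last by move=> a b; rewrite andbC.
rewrite (row_sum (fun a b => (a != b) && ((a \in U) && (b \in U)))) (sum_split (K := U) (c1 := (#|U| - 1)%N) (c2 := 0%N)).
- by rewrite muln0 addn0.
- move=> a ha; rewrite (cardsD1 a U) ha add1n subn1 /=; apply: eq_card => b; rewrite !inE. by rewrite eq_sym.
- move=> a ha; apply/eqP; rewrite cards_eq0; apply/eqP/setP => b; rewrite !inE (negbTE ha).
  by rewrite andbF.
Qed.

Lemma light_count m g (i : 'I_m) (S : 'I_m -> 'I_m -> bool) :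
  (forall a b, S a b = S b a) -> (forall a, S a a) -> (forall a, #|[set j | S j a]| <= g)%N ->
  ((m - 1) * (m - 1 - g) <=
   2 * #|[set P : pairs m | [&& (val P).1 != i, (val P).2 != i & ~~ S (val P).1 (val P).2]]|)%N.
Proof.
move=> Ss Sr Sg.
rewrite (sym_count (R := fun a b => [&& a != i, b != i & ~~ S a b])); last first.
  by move=> a b; rewrite Ss; case: (a != i); case: (b != i).
rewrite (row_sum (fun a b => (a != b) && [&& a != i, b != i & ~~ S a b])).
have -> : ((m - 1) * (m - 1 - g) = \sum_(a < m) (if a == i then 0 else m - 1 - g))%N.
  rewrite (sum_split (K := [set i]) (c1 := 0%N) (c2 := (m - 1 - g)%N)).
  - by rewrite cards1 muln0.
  - by move=> a; rewrite inE => ->.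
  - by move=> a; rewrite inE => /negbTE ->.
apply: leq_sum => a _; case: eqP => [//|/eqP nai].
apply: (@leq_trans #|~: (i |: [set j | S j a])|); last first.
  apply: subset_leq_card; apply/subsetP => b; rewrite !inE negb_or => /andP[nbi nSb].
  rewrite nbi Ss nSb /= andbT; apply: (contraNneq _ nSb) => <-; exact: Sr.
have hc := cardsC (i |: [set j | S j a]); rewrite card_ord in hc.
have hu : (#|i |: [set j | S j a]| <= 1 + g)%N.
  by rewrite cardsU1; have := Sg a; case: (i \notin _) => /=; lia.
lia.
Qed.

Lemma Cm g : 'C(2 * g + 2, 2) = ((g + 1) * (2 * g + 1))%N.
Proof.
rewrite bin2.
have -> : ((2 * g + 2) * (2 * g + 2).-1 = false + ((g + 1) * (2 * g + 1)).*2)%N.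
  rewrite -mul2n /=; nia.
by rewrite half_bit_double.
Qed.

Lemma card_bij_pre (T U : finType) (F : T -> U) (Pr : pred U) : bijective F ->
  #|[set t | Pr (F t)]| = #|[set P | Pr P]|.
Proof.
move=> bF; have iF := bij_inj bF; case: bF => G FG GF.
have -> : [set P | Pr P] = F @: [set t | Pr (F t)].
  apply/setP => P; rewrite inE; apply/idP/imsetP.
    by move=> hP; exists (G P); rewrite ?inE GF.
  by case=> t; rewrite inE => ht ->.
by rewrite card_imset.
Qed.

Lemma card_inj_le m (T : finType) (S : {set T}) (phi : T -> 'I_m) :
  {in S &, injective phi} -> (#|S| <= m)%N.
Proof.
move=> hi; rewrite -(card_in_imset hi).
by have := max_card (phi @: S); rewrite card_ord.
Qed.

Local Open Scope ring_scope.

Definition Fprop m h (p : 'I_m -> vec3) (l : 'I_h -> vec3) (F : 'I_h -> pairs m) :=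
  bijective F /\ forall t, dot (l t) (p (val (F t)).1) = 0 /\ dot (l t) (p (val (F t)).2) = 0.

Lemma mu_pt_lower m h (p : 'I_m -> vec3) (l : 'I_h -> vec3) F x (K : {set 'I_m}) :
  Fprop p l F -> (forall j, j \in K -> same_pt x (p j)) ->
  (#|K| * (2 * m - #|K| - 1) <= 2 * mu_pt l x)%N.
Proof.
move=> [bF hF] hK; apply: leq_trans (heavy_count K) _; rewrite leq_mul2l /=.
rewrite -(card_bij_pre (fun P : pairs m => ((val P).1 \in K) || ((val P).2 \in K)) bF).
apply: subset_leq_card; apply/subsetP => t; rewrite !inE => /orP[hj|hj].
- by apply/eqP; apply: (same_pt_dotr (hK _ hj)); case: (hF t).
- by apply/eqP; apply: (same_pt_dotr (hK _ hj)); case: (hF t).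
Qed.

Lemma same_pt_of_eq u v (c : C) : u != 0 -> u = c *: v -> same_pt u v.
Proof.
move=> hu e; have hc : c != 0 by apply: contraNneq hu => c0; rewrite e c0 scale0r.
by rewrite e same_pt_scale.
Qed.

Lemma mu_line_lower m h (p : 'I_m -> vec3) (l : 'I_h -> vec3) F L (Pr : pred (pairs m)) :
  Fprop p l F -> lines_rep l -> (forall j, p j != 0) -> L != 0 ->
  (forall P, Pr P -> [/\ dot L (p (val P).1) = 0, dot L (p (val P).2) = 0 &
                        ~~ same_pt (p (val P).1) (p (val P).2)]) ->
  (#|[set P | Pr P]| <= mu_line l L)%N.
Proof.
move=> [bF hF] hl hp hL hPr.
rewrite -(card_bij_pre Pr bF); apply: subset_leq_card; apply/subsetP => t; rewrite !inE => ht.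
have [d1 d2 ns] := hPr _ ht.
have hc := cross_neq0 (hp _) (hp _) ns.
have [lam hlam] := perp2 hc (hF t).1 (hF t).2.
have [mu hmu] := perp2 hc d1 d2.
have mu0 : mu != 0 by apply: contraNneq hL => m0; rewrite hmu m0 scale0r.
apply: (@same_pt_of_eq _ _ (lam / mu)) => //.
by rewrite hlam hmu scalerA divfK.
Qed.

Lemma part_i g (A : 'M[C]_3) (p : 'I_(2 * g + 2) -> vec3) (l : 'I_('C(2 * g + 2, 2)) -> vec3) i :
  sym_rep A p -> in_Gamma A p l -> (g + 1 <= weight p i)%N -> ~ semistable l.
Proof.
move=> [_ hp] hG hw [hss _].
have [F hF] := gamma_struct hG.
have := mu_pt_lower (x := p i) (K := [set j | same_pt (p j) (p i)]) hF.
have := hss _ (hp i).1.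
have hK : (#|[set j | same_pt (p j) (p i)]| <= 2 * g + 2)%N.
  by have := max_card [set j | same_pt (p j) (p i)]; rewrite card_ord.
have hC := Cm g; move: hw hK; rewrite /weight.
set w := #|_|; set mu := mu_pt l (p i) => hw hK h1 h2.
have {h2} h2 : (w * (2 * (2 * g + 2) - w - 1) <= 2 * mu)%N.
  by apply: h2 => j; rewrite inE same_pt_sym.
have hh : (0 <= (w - (g + 1)) * (2 * g + 2 - w))%N by [].
nia.
Qed.

Lemma weight1_eq m (p : 'I_m -> vec3) i j : weight p i = 1%N -> same_pt (p j) (p i) -> j = i.
Proof.
move=> /eqP /cards1P [x hx] hj.
have : j \in [set k | same_pt (p k) (p i)] by rewrite inE.
have : i \in [set k | same_pt (p k) (p i)] by rewrite inE same_pt_refl.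
by rewrite hx !inE => /eqP -> /eqP.
Qed.

Lemma part_ii g (A : 'M[C]_3) (p : 'I_(2 * g + 2) -> vec3) (l : 'I_('C(2 * g + 2, 2)) -> vec3) :
  sym_rep A p -> lines_rep l -> in_Gamma A p l ->
  (exists u v, line_pair A u v /\
     exists i, [/\ dot u (p i) = 0, dot v (p i) != 0, weight p i = 1%N &
       forall j, dot u (p j) = 0 -> dot v (p j) != 0 -> same_pt (p j) (p i)]) ->
  ~ semistable l.
Proof.
move=> hs hl hG [u [v [[hu hv suv hq] [i [ui vi wi huniq]]]]] hss.
case: (classic (exists a, (g + 1 <= weight p a)%N)) => [[a ha]|hna].
  exact: part_i hs hG ha hss.
have hw : forall a, (weight p a <= g)%N.
  by move=> a; rewrite leqNgt; apply/negP => ha; apply: hna; exists a; rewrite addn1.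
have [_ hp] := hs.
have [F hF] := gamma_struct hG.
have onv : forall j, j != i -> dot v (p j) = 0.
  move=> j nji; case: (eqVneq (dot v (p j)) 0) => // vj; exfalso; apply: (negP nji); apply/eqP.
  apply: weight1_eq wi _; apply: (huniq j _ vj).
  have := (hp j).2; rewrite hq => /eqP; rewrite mulf_eq0 (negbTE vj) orbF.
  by move/eqP.
have hT := mu_line_lower
  (Pr := fun P : pairs (2 * g + 2) => [&& (val P).1 != i, (val P).2 != i & ~~ same_pt (p (val P).1) (p (val P).2)])
  hF hl (fun j => (hp j).1) hv.
have {hT} hT : (#|[set P : pairs (2 * g + 2) | [&& (val P).1 != i, (val P).2 != i & ~~ same_pt (p (val P).1) (p (val P).2)]]| <= mu_line l v)%N.
  by apply: hT => P /and3P [h1 h2 h3]; split => //; apply: onv.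
have hL := light_count (g := g) i (S := fun a b => same_pt (p a) (p b))
   (fun a b => same_pt_sym (p a) (p b)) (fun a => same_pt_refl (p a)) hw.
have := hss.2 _ hv.
have hC := Cm g.
move: hT hL; set T := #|_|; set mu := mu_line l v => hT hL h3.
nia.
Qed.

Lemma pairs_diff m (P Q : pairs m) : P != Q ->
  exists c, [/\ c = (val Q).1 \/ c = (val Q).2, c != (val P).1 & c != (val P).2].
Proof.
move=> nPQ.
case: (boolP (((val Q).1 != (val P).1) && ((val Q).1 != (val P).2))) => [/andP[h1 h2]|h].
  by exists (val Q).1; split => //; left.
case: (boolP (((val Q).2 != (val P).1) && ((val Q).2 != (val P).2))) => [/andP[h1 h2]|h'].
  by exists (val Q).2; split => //; right.
exfalso; move/eqP: nPQ; apply; apply/val_inj.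
move: h h'; have := valP P; have := valP Q.
case: (val P) => a b; case: (val Q) => c d /= hcd hab.
rewrite !negb_and !negbK => /orP[/eqP e1|/eqP e1] /orP[/eqP e2|/eqP e2]; subst.
- by move: hcd; rewrite ltnn.
- by [].
- by move: (ltn_trans hab hcd); rewrite ltnn.
- by move: hcd; rewrite ltnn.
Qed.

Lemma distinct_pts m (p : 'I_m -> vec3) a b : (forall i, weight p i = 1%N) -> a != b ->
  ~~ same_pt (p a) (p b).
Proof. by move=> hw nab; apply/negP => /(weight1_eq (hw b)) e; move: nab; rewrite e eqxx. Qed.

Lemma pair_neq m (P : pairs m) : (val P).1 != (val P).2.
Proof. by rewrite neq_ltn (valP P). Qed.

Lemma Dist m h (A : 'M[C]_3) (p : 'I_m -> vec3) (l : 'I_h -> vec3) F t1 t2 :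
  integral_conic A -> sym_rep A p -> (forall i, weight p i = 1%N) -> lines_rep l ->
  Fprop p l F -> t1 != t2 -> ~~ same_pt (l t1) (l t2).
Proof.
move=> hint [_ hp] hw hl [bF hF] nt; apply/negP => hs.
have nPQ : F t1 != F t2 by apply: contra nt => /eqP /(bij_inj bF) ->.
have [c [hc n1 n2]] := pairs_diff nPQ.
have d2 : dot (l t2) (p c) = 0 by case: hc => ->; case: (hF t2).
have d1 : dot (l t1) (p c) = 0 := same_pt_dot hs d2.
set a := (val (F t1)).1; set b := (val (F t1)).2.
have nab : a != b := pair_neq (F t1).
have hcr := cross_neq0 (hp a).1 (hp b).1 (distinct_pts hw nab).
have [lam hlam] := perp2 hcr (hF t1).1 (hF t1).2.
have lam0 : lam != 0 by apply: contraNneq (hl t1) => l0; rewrite hlam l0 scale0r.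
apply: (K3 hint (hp a).1 (hp b).1 (hp c).1 (distinct_pts hw nab)).
- by apply: (distinct_pts hw); rewrite eq_sym.
- by apply: (distinct_pts hw); rewrite eq_sym.
- exact: (hp a).2.
- exact: (hp b).2.
- exact: (hp c).2.
- by move: d1; rewrite hlam dotZl => /eqP; rewrite mulf_eq0 (negbTE lam0) /= => /eqP.
Qed.

Lemma mu_line_le1 m h (A : 'M[C]_3) (p : 'I_m -> vec3) (l : 'I_h -> vec3) F L :
  integral_conic A -> sym_rep A p -> (forall i, weight p i = 1%N) -> lines_rep l ->
  Fprop p l F -> (mu_line l L <= 1)%N.
Proof.
move=> hint hs hw hl hF.
apply: (@card_inj_le 1 _ _ (fun _ => ord0)) => t1 t2; rewrite !inE => h1 h2 _.
case: (eqVneq t1 t2) => // nt; exfalso.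
have := Dist hint hs hw hl hF nt; rewrite (same_pt_trans h1) //.
by rewrite same_pt_sym.
Qed.

Lemma mu_pt_le m h (A : 'M[C]_3) (p : 'I_m -> vec3) (l : 'I_h -> vec3) F x :
  integral_conic A -> sym_rep A p -> (forall i, weight p i = 1%N) -> lines_rep l ->
  Fprop p l F -> x != 0 -> (mu_pt l x <= m)%N.
Proof.
move=> hint hs hw hl hF hx.
have [_ hp] := hs; have [bF hFt] := hF.
pose phi t := if same_pt (p (val (F t)).1) x then (val (F t)).2 else (val (F t)).1.
have phi_dot t : dot (l t) (p (phi t)) = 0 by rewrite /phi; case: ifP => _; case: (hFt t).
have phi_ns t : ~~ same_pt (p (phi t)) x.
  rewrite /phi; case: ifP => [h1|->//]; apply/negP => h2.
  have := distinct_pts hw (pair_neq (F t)).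
  by rewrite (same_pt_trans h1) // same_pt_sym.
apply: (card_inj_le (phi := phi)) => t1 t2; rewrite !inE => /eqP h1 /eqP h2 e.
case: (eqVneq t1 t2) => // nt; exfalso.
set c := phi t1 in e.
have hcr := cross_neq0 (hp c).1 hx (phi_ns t1).
have [l1 hl1] := perp2 hcr (phi_dot t1) h1.
have dc2 : dot (l t2) (p c) = 0 by rewrite e; apply: phi_dot.
have [l2 hl2] := perp2 hcr dc2 h2.
have l20 : l2 != 0 by apply: contraNneq (hl t2) => l0; rewrite hl2 l0 scale0r.
have := Dist hint hs hw hl hF nt.
rewrite (@same_pt_of_eq _ _ (l1 / l2)) //.
by rewrite hl1 hl2 scalerA divfK.
Qed.

Lemma part_iii g (hg : (3 <= g)%N) (A : 'M[C]_3) (p : 'I_(2 * g + 2) -> vec3)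
  (l : 'I_('C(2 * g + 2, 2)) -> vec3) :
  sym_rep A p -> lines_rep l -> in_Gamma A p l -> integral_conic A ->
  (forall i, weight p i = 1%N) -> in_V (2 * g + 2) l.
Proof.
move=> hs hl hG hint hw.
have [F hF] := gamma_struct hG.
have hC := Cm g.
have mupt x : x != 0 -> (mu_pt l x <= 2 * g + 2)%N.
  by move=> hx; apply: (mu_pt_le hint hs hw hl hF hx).
have muline L : (mu_line l L <= 1)%N by apply: (mu_line_le1 _ hint hs hw hl hF).
split.
- split => [x hx|L hL].
    have := mupt x hx; nia.
  have := muline L; nia.
- by exists A, p.
move=> A' p' hs' hG'.
have [F' hF'] := gamma_struct hG'.
have [[symA' A'n0] hp'] := hs'.
have dist' : forall a b, a != b -> ~~ same_pt (p' a) (p' b).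
  move=> a b nab; apply/negP => sab.
  have := mu_pt_lower (x := p' a) (K := [set j | same_pt (p' j) (p' a)]) hF'.
  have hK : forall j, j \in [set j | same_pt (p' j) (p' a)] -> same_pt (p' a) (p' j).
    by move=> j; rewrite inE same_pt_sym.
  move/(_ hK).
  have h2 : (2 <= #|[set j | same_pt (p' j) (p' a)]|)%N.
    have c2 : #|[set a; b]| = 2%N by rewrite cards2 nab.
    apply: (@leq_trans #|[set a; b]|); first by rewrite c2.
    apply: subset_leq_card; apply/subsetP => j; rewrite !inE => /orP[/eqP ->|/eqP ->].
      exact: same_pt_refl.
    by rewrite same_pt_sym.
  have hm : (#|[set j | same_pt (p' j) (p' a)]| <= 2 * g + 2)%N.
    by have := max_card [set j | same_pt (p' j) (p' a)]; rewrite card_ord.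
  have := mupt _ (hp' a).1.
  move: h2 hm; set w := #|_|; set mu := mu_pt _ _ => h2 hm h3 h4.
  have hh : (0 <= (w - 2) * (2 * (2 * g + 2) - 3 - w))%N by [].
  nia.
move=> [u [v huv]].
have few : forall L, L != 0 -> (#|[set j | dot L (p' j) == 0%R]| <= 2)%N.
  move=> L hL; set W := [set j | dot L (p' j) == 0%R].
  have := mu_line_lower (Pr := fun P : pairs (2 * g + 2) => ((val P).1 \in W) && ((val P).2 \in W))
    hF' hl (fun j => (hp' j).1) hL.
  have hpr : forall P : pairs (2 * g + 2), ((val P).1 \in W) && ((val P).2 \in W) ->
     [/\ dot L (p' (val P).1) = 0, dot L (p' (val P).2) = 0 & ~~ same_pt (p' (val P).1) (p' (val P).2)].
    move=> P; rewrite !inE => /andP[/eqP h1 /eqP h2]; split => //.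
    exact: dist' (pair_neq P).
  move/(_ hpr) => h1.
  have := inner_count W; have := muline L.
  move: h1; set T := #|_|; set mu := mu_line _ _; set w := #|W| => h1 h2 h3.
  nia.
have qz : forall x, qf A' x = 0 -> A' = 0 -> False by move=> _ _ e; move: A'n0; rewrite e eqxx.
have hu : u != 0.
  apply/negP => /eqP u0; apply: (qz 0) => //; first exact: qf0.
  by apply: qf_eq0 => // x; rewrite huv u0 dot0l mul0r.
have hv : v != 0.
  apply/negP => /eqP v0; apply: (qz 0) => //; first exact: qf0.
  by apply: qf_eq0 => // x; rewrite huv v0 dot0l mulr0.
have hU := few _ hu; have hV := few _ hv.
have hUV : [set j | dot u (p' j) == 0%R] :|: [set j | dot v (p' j) == 0%R] = setT.
  apply/setP => j; rewrite !inE -mulf_eq0 -huv (hp' j).2 eqxx //.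
have := cardsU [set j | dot u (p' j) == 0%R] [set j | dot v (p' j) == 0%R].
rewrite hUV cardsT card_ord.
move: hU hV; set a := #|_|; set b := #|_|; set c := #|_| => hU hV.
lia.
Qed.


Unset Implicit Arguments.

Theorem lemma3p1 (g : nat) (hg : (3 <= g)%N)
  (A : 'M[C]_3) (p : 'I_(2 * g + 2) -> vec3) (l : 'I_('C(2 * g + 2, 2)) -> vec3) :
  sym_rep A p -> lines_rep l -> in_Gamma A p l ->
  [/\ (* (i) *)
      (exists i, (g + 1 <= weight p i)%N) -> ~ semistable l,
      (* (ii) *)
      (exists u v, line_pair A u v /\
         exists i, [/\ dot u (p i) = 0, dot v (p i) != 0, weight p i = 1%N &
           forall j, dot u (p j) = 0 -> dot v (p j) != 0 -> same_pt (p j) (p i)]) ->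
      ~ semistable l &
      (* (iii) *)
      integral_conic A -> (forall i, weight p i = 1%N) -> in_V (2 * g + 2) l].
Proof.
move=> hs hl hG; split.
- by case=> i hi; apply: (part_i hs hG hi).
- exact: (part_ii hs hl hG).
- by move=> hint hw; apply: (part_iii hg hs hl hG hint hw).
Qed.
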